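(* Let $G$ be a finite graph and $\alpha(G)$ its independence number. (a) For every integer $b\ge 1$, $\phi^0_b(G)\ge \phi(G)$; moreover $\lim_{b\to\infty}\phi^0_b(G)=\phi(G)$. (b) For all integers $a'\ge a\ge 0$ and $b'\ge b\ge 1$, $\phi^a_b(G)\ge \phi^{a'}_{b'}(G)$. (c) For all integers $a\ge 0$ and $b\ge 1$, $\phi^a_b(G)\ge \frac{|V(G)|-a\alpha(G)}{\bar{\alpha}(G)}$.
   Context: An independent set $F$ of $G$ is a free independent set if it is contained in at least two distinct maximal independent sets of $G$; $\bar{\alpha}(G)$ is the maximum size of a free independent set. An edge $e=uv$ supports a free independent set $F$ if $F\cap(N(u)\cup N(v))=\emptyset$. The free chromatic number $\phi(G)$ is the minimum $t$ such that $V(G)$ can be partitioned into $t$ free independent sets ($\infty$ if impossible). For integers $a\ge0$, $b\ge1$, the $(a,b)$-free chromatic number $\phi^a_b(G)$ is the minimum natural number $t$ such that: (1) $V(G)$ is partitioned into independent sets $V_1,\dots,V_t$, of which $V_1,\dots,V_{t-a}$ are free independent sets; and (2) there are edges $e_1,\dots,e_{t-a}$ (not necessarily distinct) with $e_i$ supporting $V_i$ for each $i$, such that every vertex $v$ is incident with at most $b$ of the edges $e_1,\dots,e_{t-a}$. If no such $t$ exists, $\phi^a_b(G)=\infty$. *)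

(* Defs.v *)
From mathcomp Require Import all_boot all_order all_algebra.
From Stdlib Require Import ClassicalDescription.
Set Implicit Arguments. Unset Strict Implicit. Unset Printing Implicit Defensive.

Section FreeColoring.
Variables (T : finType) (g : rel T).

Definition independent (S : {set T}) : bool :=
  [forall x in S, forall y in S, ~~ g x y].

Definition maximal_independent (S : {set T}) : bool := maxset independent S.

Definition free_independent (F : {set T}) : bool :=
  independent F &&
  [exists M1 : {set T}, exists M2 : {set T},
     [&& maximal_independent M1, maximal_independent M2, M1 != M2,
         F \subset M1 & F \subset M2]].

Definition nbhd (u : T) : {set T} := [set x | g u x].

Definition is_edge (e : T * T) : bool := g e.1 e.2.

Definition supports (e : T * T) (F : {set T}) : bool :=
  F :&: (nbhd e.1 :|: nbhd e.2) == set0.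

Definition alpha : nat := \max_(S : {set T} | independent S) #|S|.

(* alpha-bar(G): maximum size of a free independent set (0 if there is none) *)
Definition alpha_bar : nat := \max_(F : {set T} | free_independent F) #|F|.

(* P : 'I_t -> {set T} is a partition of V(G) into t (possibly empty) parts *)
Definition is_partition (t : nat) (P : {ffun 'I_t -> {set T}}) : bool :=
  [forall i, forall j, (i != j) ==> [disjoint P i & P j]] &&
  (\bigcup_i P i == [set: T]).

Definition free_colorable (t : nat) : bool :=
  [exists P : {ffun 'I_t -> {set T}},
     is_partition P && [forall i, free_independent (P i)]].

(* the conditions (1),(2) in the definition of phi^a_b, for a given t;
   parts with index i < t - a (i.e. V_1..V_{t-a}) are free and supported by
   the edge E i; each vertex is incident with at most b of these edges,
   counted with multiplicity. *)
Definition ab_colorable (a b t : nat) : bool :=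
  [exists P : {ffun 'I_t -> {set T}}, exists E : {ffun 'I_t -> T * T},
    [&& is_partition P,
        [forall i, independent (P i)],
        [forall i : 'I_t, (i < t - a) ==>
            [&& free_independent (P i), is_edge (E i) & supports (E i) (P i)]] &
        [forall v : T,
            #|[set i : 'I_t | (i < t - a) && ((v == (E i).1) || (v == (E i).2))]| <= b]]].

End FreeColoring.

(* extended naturals: None stands for infinity *)
Definition min_or_inf (p : pred nat) : option nat :=
  match excluded_middle_informative (exists n, p n) with
  | left H => Some (ex_minn H)
  | right _ => None
  end.

Definition phi (T : finType) (g : rel T) : option nat := min_or_inf (free_colorable g).

Definition phi_ab (T : finType) (g : rel T) (a b : nat) : option nat :=
  min_or_inf (ab_colorable g a b).

Definition le_inf (x y : option nat) : bool :=
  match x, y with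
  | _, None => true
  | None, Some _ => false
  | Some m, Some n => m <= n
  end.

(* convergence of a sequence in N ∪ {∞} (one-point compactification topology) *)
Definition converges_inf (u : nat -> option nat) (l : option nat) : Prop :=
  match l with
  | Some k => exists N, forall n, N <= n -> u n = Some k
  | None => forall M, exists N, forall n, N <= n -> le_inf (Some M) (u n)
  end.

(* Main.v *)
Require Import Defs.
From mathcomp Require Import all_boot all_order all_algebra.
From mathcomp Require Import lra.
From Stdlib Require Import ClassicalDescription.
Import GRing.Theory Num.Theory.
Set Implicit Arguments. Unset Strict Implicit.

Lemma min_or_inf_Some (p : pred nat) k : min_or_inf p = Some k ->
  p k /\ forall m, p m -> k <= m.
Proof.
rewrite /min_or_inf; case: excluded_middle_informative => // H [<-].
by case: ex_minnP.
Qed.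

Lemma min_or_inf_None (p : pred nat) m : min_or_inf p = None -> ~~ p m.
Proof.
rewrite /min_or_inf; case: excluded_middle_informative => // H _.
by apply/negP => pm; apply: H; exists m.
Qed.

Lemma min_or_inf_eq (p : pred nat) k : p k -> (forall m, p m -> k <= m) ->
  min_or_inf p = Some k.
Proof.
move=> pk hk; case E: (min_or_inf p) => [j|]; last by rewrite (negbTE (min_or_inf_None k E)) in pk.
have [pj hj] := min_or_inf_Some E.
by congr Some; apply/eqP; rewrite eqn_leq hj // hk.
Qed.

Lemma le_inf_mono (p q : pred nat) : (forall t, q t -> p t) ->
  le_inf (min_or_inf p) (min_or_inf q).
Proof.
move=> H; case Eq: (min_or_inf q) => [k|]; last by case: (min_or_inf p).
have [qk _] := min_or_inf_Some Eq.
case Ep: (min_or_inf p) => [j|]; last by have := min_or_inf_None k Ep; rewrite (H _ qk).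
by have [_ hj] := min_or_inf_Some Ep; apply: hj; apply: H.
Qed.

Section G.
Variables (T : finType) (g : rel T).
Hypotheses (g_sym : symmetric g) (g_irr : irreflexive g).

Lemma indepP S x y : independent g S -> x \in S -> y \in S -> ~~ g x y.
Proof. by move=> /forall_inP H xS yS; move: (H x xS) => /forall_inP; apply. Qed.

Lemma free_edge F : free_independent g F ->
  exists e, is_edge g e && supports g e F.
Proof.
case/andP=> _ /existsP[M1 /existsP[M2 /and5P[m1 m2 ne s1 s2]]].
move/maxsetP: m1 => [i1 mx1]; move/maxsetP: m2 => [i2 mx2].
have : ~~ (M1 \subset M2).
  by apply/negP => s; move: ne; rewrite (mx1 M2 i2 s) eqxx.
case/subsetPn => u uM1 uM2.
have : ~~ independent g (u |: M2).
  apply/negP => iu; have := mx2 _ iu (subsetUr _ _) => E.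
  by move: uM2; rewrite -E setU11.
have uns : forall x y, x \in u |: M2 -> y \in u |: M2 -> g x y ->
    exists v, (v \in M2) && g u v.
  move=> x y; rewrite !in_setU1 => /orP[/eqP->|xM] /orP[/eqP->|yM] gxy.
  - by rewrite g_irr in gxy.
  - by exists y; rewrite yM gxy.
  - by exists x; rewrite xM g_sym gxy.
  - by rewrite (negbTE (indepP i2 xM yM)) in gxy.
move=> ni; have [v /andP[vM guv]] : exists v, (v \in M2) && g u v.
  move: ni; rewrite /independent => /forall_inPn[x xS /forall_inPn[y yS]].
  by rewrite negbK; apply: uns.
exists (u, v); rewrite /is_edge /= guv /supports /=.
apply/eqP/setP => x; rewrite !inE; apply/negP => /andP[xF /orP[gx|gx]].
- by rewrite (negbTE (indepP i1 uM1 (subsetP s1 x xF))) in gx.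
- by rewrite (negbTE (indepP i2 vM (subsetP s2 x xF))) in gx.
Qed.

Lemma ab_free b t : ab_colorable g 0 b t -> free_colorable g t.
Proof.
case/existsP=> P /existsP[E /and4P[hp _ hf _]].
apply/existsP; exists P; rewrite hp /=; apply/forallP => i.
by move/forallP: hf => /(_ i); rewrite subn0 ltn_ord /= => /and3P[].
Qed.

Lemma free_ab b t : t <= b -> free_colorable g t -> ab_colorable g 0 b t.
Proof.
move=> tb /existsP[P /andP[hp hf]].
have H : forall i, exists e, is_edge g e && supports g e (P i).
  by move=> i; apply: free_edge; move/forallP: hf; apply.
apply/existsP; exists P; apply/existsP; exists [ffun i => xchoose (H i)].
rewrite hp /=; apply/and3P; split.
- by apply/forallP => i; move/forallP: hf => /(_ i) /andP[].
- apply/forallP => i; apply/implyP => _; rewrite ffunE.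
  have /andP[h1 h2] := xchooseP (H i); rewrite h1 h2 !andbT; exact: (forallP hf i).
- apply/forallP => v; apply: leq_trans tb; apply: leq_trans (max_card _) _.
  by rewrite card_ord.
Qed.

Lemma ab_mono a a' b b' t : a <= a' -> b <= b' ->
  ab_colorable g a b t -> ab_colorable g a' b' t.
Proof.
move=> aa bb /existsP[P /existsP[E /and4P[hp hi hf hc]]].
apply/existsP; exists P; apply/existsP; exists E; rewrite hp hi /=.
have lt : forall i : 'I_t, i < t - a' -> i < t - a.
  by move=> i h; apply: leq_trans h _; apply: leq_sub2l.
apply/andP; split.
- apply/forallP => i; apply/implyP => h; move/forallP: hf => /(_ i) /implyP; apply.
  exact: lt.
- apply/forallP => v; move/forallP: hc => /(_ v) h; apply: leq_trans _ (leq_trans h bb).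
  apply: subset_leq_card; apply/subsetP => i; rewrite !inE => /andP[h1 ->].
  by rewrite lt.
Qed.

Lemma card_bigcup_le t (P : 'I_t -> {set T}) :
  #|\bigcup_i P i| <= \sum_i #|P i|.
Proof.
apply: (big_rec2 (fun (A : {set T}) (n : nat) => #|A| <= n)); first by rewrite cards0.
move=> i A n _ h; apply: leq_trans (leq_card_setU (P i) A) _.
exact: leq_add.
Qed.

Lemma count_bound a b t : ab_colorable g a b t ->
  #|T| <= t * alpha_bar g + a * alpha g.
Proof.
case/existsP=> P /existsP[E /and4P[hp hi hf _]].
move/andP: hp => [_ /eqP hU].
have -> : #|T| = #|\bigcup_i P i| by rewrite hU cardsT.
apply: leq_trans (card_bigcup_le _) _.
pose f := fun i : nat => if i < t - a then alpha_bar g else alpha g.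
apply: (@leq_trans (\sum_(i < t) f i)).
  apply: leq_sum => i _; rewrite /f; case: ifP => h.
  + move/forallP: hf => /(_ i); rewrite h /= => /and3P[fr _ _].
    rewrite /alpha_bar; exact: (@leq_bigmax_cond _ (free_independent g) (fun F : {set T} => #|F|) (P i) fr).
  + move/forallP: hi => /(_ i) ii.
    rewrite /alpha; exact: (@leq_bigmax_cond _ (independent g) (fun F : {set T} => #|F|) (P i) ii).
rewrite -(big_mkord xpredT f) (@big_cat_nat _ _ _ (t - a) 0 t _ _ (leq0n (t - a)) (leq_subr a t)) /=.
rewrite (@eq_big_nat _ _ _ 0 (t - a) f (fun _ => alpha_bar g)); last first.
  by move=> i /andP[_ h]; rewrite /f h.
rewrite (@eq_big_nat _ _ _ (t - a) t f (fun _ => alpha g)); last first.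
  by move=> i /andP[h _]; rewrite /f ltnNge h.
rewrite !sum_nat_const_nat subn0; apply: leq_add.
  by apply: leq_mul => //; apply: leq_subr.
by apply: leq_mul => //; rewrite -minnE geq_minr.
Qed.

End G.

Theorem mainTheorem6 (T : finType) (g : rel T)
    (g_sym : symmetric g) (g_irr : irreflexive g) :
  (* (a) *)
  ((forall b : nat, (0 < b)%N -> le_inf (phi g) (phi_ab g 0 b)) /\
   converges_inf (fun b => phi_ab g 0 b) (phi g)) /\
  (* (b) *)
  (forall a a' b b' : nat, (a <= a')%N -> (0 < b)%N -> (b <= b')%N ->
     le_inf (phi_ab g a' b') (phi_ab g a b)) /\
  (* (c) *)
  (forall a b : nat, (0 < b)%N ->
     match phi_ab g a b with
     | Some t => ((#|T|%:R - a%:R * (alpha g)%:R) / (alpha_bar g)%:R <= t%:R :> rat)%R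
     | None => true
     end).
Proof.
have A1 : forall b, le_inf (phi g) (phi_ab g 0 b).
  by move=> b; apply: le_inf_mono => t; apply: ab_free.
split; [split|split].
- by move=> b _; apply: A1.
- rewrite /converges_inf; case E: (phi g) => [k|].
  + have [fk hk] := min_or_inf_Some E.
    exists k => n kn; apply: min_or_inf_eq; first exact: free_ab.
    by move=> m /ab_free; apply: hk.
  + move=> M; exists 0 => n _; have := A1 n; rewrite E.
    by case: (phi_ab g 0 n).
- move=> a a' b b' aa _ bb; apply: le_inf_mono => t; exact: ab_mono.
- move=> a b _; case E: (phi_ab g a b) => [t|] //.
  have [ht _] := min_or_inf_Some E.
  have := count_bound ht.
  case: (posnP (alpha_bar g)) => [->|hp] h.
    by rewrite invr0 mulr0 ler0n.
  rewrite ler_pdivrMr ?ltr0n //.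
  rewrite -(ler_nat rat) natrD !natrM in h.
  move: h; set x := (#|T|%:R : rat); set y := (t%:R : rat); set z := ((alpha_bar g)%:R : rat).
  set u := (a%:R : rat); set w := ((alpha g)%:R : rat) => h.
  by rewrite lerBlDr.
Qed.
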